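(* Let $K$ be a polygonal knot with vertices $v_1,\dots,v_n$ and edges $e_1,\dots,e_n$ (indices mod $n$). Then for each $i$, $$MD(e_i,v_{i+2}) \geq \min\{2\,MinRad(K),\,MinEdge(K)\},$$ and in particular, when $angle(v_{i+1})\geq \pi/2$, we have $MD(e_i,v_{i+2}) \geq 2\,MinRad(K)$. Similarly, $MD(e_i,v_{i-1}) \geq \min\{2\,MinRad(K),\,MinEdge(K)\}$, and when $angle(v_{i})\geq \pi/2$, $MD(e_i,v_{i-1}) \geq 2\,MinRad(K)$.
   Context: A polygonal knot $K$ with $n$ edges is given by distinct vertices $v_1,\dots,v_n\in\mathbb{R}^3$ (indices taken mod $n$), with edges $e_i$ the straight segment from $v_i$ to $v_{i+1}$, such that edges meet only at the common vertex of adjacent edges. $|e_i|$ denotes the length of $e_i$; $MinEdge(K)=\min_i|e_i|$. $angle(v_i)\in[0,\pi)$ is the turning angle at $v_i$, i.e. the angle between the vectors $v_i-v_{i-1}$ and $v_{i+1}-v_i$. Define $Rad(v_i)=\dfrac{\min\{|e_{i-1}|,|e_i|\}}{2\tan(angle(v_i)/2)}$ (equal to $+\infty$ if $angle(v_i)=0$) and $MinRad(K)=\min_i Rad(v_i)$. For an edge $e$ and vertex $v$, $MD(e,v)$ denotes the minimum Euclidean distance between the edge $e$ and the point $v$. *)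

(* Defs.v *)
From Stdlib Require Import Reals List.
From Coquelicot Require Import Coquelicot.
Open Scope R_scope.

Record pt := Pt { px : R; py : R; pz : R }.
Definition padd (a b : pt) := Pt (px a + px b) (py a + py b) (pz a + pz b).
Definition psub (a b : pt) := Pt (px a - px b) (py a - py b) (pz a - pz b).
Definition pscal (t : R) (a : pt) := Pt (t * px a) (t * py a) (t * pz a).
Definition dot (a b : pt) := px a * px b + py a * py b + pz a * pz b.
Definition norm (a : pt) := sqrt (dot a a).
Definition dist (a b : pt) := norm (psub a b).

Definition on_seg (a b p : pt) : Prop :=
  exists t, 0 <= t <= 1 /\ p = padd a (pscal t (psub b a)).

Definition vtx (n : nat) (v : nat -> pt) (i : nat) : pt := v (i mod n)%nat.

(* index i-1 mod n *)
Definition prev (n i : nat) : nat := (i + n - 1)%nat.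

Definition is_knot (n : nat) (v : nat -> pt) : Prop :=
  (3 <= n)%nat /\
  (forall i j, (i < n)%nat -> (j < n)%nat -> i <> j -> v i <> v j) /\
  (forall i j p, (i < n)%nat -> (j < n)%nat -> i <> j ->
     on_seg (vtx n v i) (vtx n v (S i)) p ->
     on_seg (vtx n v j) (vtx n v (S j)) p ->
     (j = (S i mod n)%nat /\ p = vtx n v j) \/
     (i = (S j mod n)%nat /\ p = vtx n v i)).

Definition edge_len (n : nat) (v : nat -> pt) (i : nat) : R :=
  dist (vtx n v (S i)) (vtx n v i).

Definition MinEdge (n : nat) (v : nat -> pt) : R :=
  fold_right Rmin (edge_len n v 0) (map (edge_len n v) (seq 0 n)).

(* turning angle at v_i: angle between v_i - v_(i-1) and v_(i+1) - v_i *)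
Definition angle (n : nat) (v : nat -> pt) (i : nat) : R :=
  let u := psub (vtx n v i) (vtx n v (prev n i)) in
  let w := psub (vtx n v (S i)) (vtx n v i) in
  acos (dot u w / (norm u * norm w)).

Definition Rad (n : nat) (v : nat -> pt) (i : nat) : Rbar :=
  if Req_EM_T (angle n v i) 0 then p_infty
  else Finite (Rmin (edge_len n v (prev n i)) (edge_len n v i)
               / (2 * tan (angle n v i / 2))).

Definition MinRad (n : nat) (v : nat -> pt) : Rbar :=
  fold_right Rbar_min p_infty (map (Rad n v) (seq 0 n)).

Definition MD (a b x : pt) : R :=
  real (Glb_Rbar (fun d => exists p, on_seg a b p /\ d = dist p x)).

Definition MinBound (n : nat) (v : nat -> pt) : Rbar :=
  Rbar_min (Rbar_mult 2 (MinRad n v)) (Finite (MinEdge n v)).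

(* Main.v *)
Require Import Defs.
From Stdlib Require Import Reals List Lia Lra Psatz.
From Coquelicot Require Import Coquelicot.
Import Defs.
Open Scope R_scope.

Lemma dot_ge0 u : 0 <= dot u u.
Proof. destruct u; unfold dot; simpl; nra. Qed.

Lemma cs u w : (dot u w)^2 <= dot u u * dot w w.
Proof.
  destruct u as [a b c], w as [d e f]; unfold dot; simpl.
  assert (E: (a*a+b*b+c*c)*(d*d+e*e+f*f) - (a*d+b*e+c*f)^2
     = (b*f-c*e)^2 + (c*d-a*f)^2 + (a*e-b*d)^2) by ring.
  assert (0 <= (b*f-c*e)^2 + (c*d-a*f)^2 + (a*e-b*d)^2).
  { assert (0 <= (b*f-c*e)^2) by apply pow2_ge_0.
    assert (0 <= (c*d-a*f)^2) by apply pow2_ge_0.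
    assert (0 <= (a*e-b*d)^2) by apply pow2_ge_0. lra. }
  lra.
Qed.

Lemma angle_facts (u w : pt) : let k := dot u w / (norm u * norm w) in
  -1 <= k <= 1 /\ dot u w = k * norm u * norm w.
Proof.
  intro k. unfold k, norm.
  pose proof (cs u w). pose proof (dot_ge0 u). pose proof (dot_ge0 w).
  pose proof (sqrt_sqrt _ H0). pose proof (sqrt_sqrt _ H1).
  pose proof (sqrt_pos (dot u u)). pose proof (sqrt_pos (dot w w)).
  set (su := sqrt (dot u u)) in *. set (sw := sqrt (dot w w)) in *.
  destruct (Req_dec (su * sw) 0) as [Z|Z].
  - assert (dot u w = 0).
    { assert (dot u u * dot w w = 0) by (rewrite <- H2, <- H3; nra). nra. }
    rewrite H6. unfold Rdiv. rewrite !Rmult_0_l. lra.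
  - assert (P : su * sw > 0) by nra.
    set (kk := dot u w / (su * sw)).
    assert (E : dot u w = kk * su * sw). { unfold kk. field. split; intro E0; apply Z; rewrite E0; ring. }
    split; [|exact E].
    assert (kk^2 * (su*sw)^2 <= (su*sw)^2).
    { replace ((su*sw)^2) with (dot u u * dot w w) by (rewrite <- H2, <- H3; ring).
      replace (kk^2 * (dot u u * dot w w)) with ((kk*su*sw)^2) by (rewrite <- H2, <- H3; ring).
      rewrite <- E; auto. }
    assert (Q : 0 < (su*sw)^2) by (apply pow_lt; lra).
    assert (kk^2 <= 1). { apply (Rmult_le_reg_r ((su*sw)^2)); lra. }
    split; nra.
Qed.

Lemma sqrt_ge_of_sq (X Y : R) : 0 <= Y -> Y*Y <= X -> Y <= sqrt X.
Proof.
  intros. rewrite <- (sqrt_square Y) by auto. apply sqrt_le_1_alt; auto.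
Qed.

Lemma next_dist a b c t : 0 <= t <= 1 ->
  let u := psub b a in let w := psub c b in
  let th := acos (dot u w / (norm u * norm w)) in
  (th <= PI/2 -> norm w <= dist (padd a (pscal t u)) c) /\
  norm w * sin th <= dist (padd a (pscal t u)) c.
Proof.
  intros Ht u w th.
  destruct (angle_facts u w) as [Hk E].
  set (k := dot u w / (norm u * norm w)) in *.
  assert (Hd : dot (psub (padd a (pscal t u)) c) (psub (padd a (pscal t u)) c)
     = (t-1)^2 * dot u u - 2*(t-1)*dot u w + dot w w).
  { unfold u, w; destruct a, b, c; unfold dot, psub, padd, pscal; simpl; ring. }
  unfold dist, norm at 2. rewrite Hd. rewrite E.
  pose proof (dot_ge0 u) as Gu. pose proof (dot_ge0 w) as Gw.
  pose proof (sqrt_sqrt _ Gu) as Su. pose proof (sqrt_sqrt _ Gw) as Sw.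
  pose proof (sqrt_pos (dot u u)) as Pu. pose proof (sqrt_pos (dot w w)) as Pw.
  unfold norm in *.
  set (su := sqrt (dot u u)) in *. set (sw := sqrt (dot w w)) in *.
  rewrite <- Su, <- Sw.
  pose proof (cos_acos _ Hk) as Ck. pose proof (acos_bound k) as Bk.
  fold th in Ck, Bk.
  pose proof (sin_ge_0 th ltac:(lra) ltac:(lra)) as Sp.
  pose proof (sin2_cos2 th) as SC. unfold Rsqr in SC.
  split.
  - intro Hle. assert (K0 : 0 <= k). { rewrite <- Ck. apply cos_ge_0; lra. }
    apply sqrt_ge_of_sq; auto.
    assert (0 <= -2*(t-1)*(k*su*sw)).
    { assert (0 <= k*su*sw) by (apply Rmult_le_pos; [apply Rmult_le_pos|]; auto). nra. }
    assert (0 <= (t-1)^2*(su*su)) by (apply Rmult_le_pos; [apply pow2_ge_0|nra]). lra.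
  - apply sqrt_ge_of_sq. apply Rmult_le_pos; auto.
    assert (0 <= ((t-1)*su - k*sw)^2) by apply pow2_ge_0.
    rewrite <- Ck in *. nra.
Qed.

Lemma prev_dist a b z t : 0 <= t <= 1 ->
  let u := psub b a in let w := psub a z in
  let th := acos (dot w u / (norm w * norm u)) in
  (th <= PI/2 -> norm w <= dist (padd a (pscal t u)) z) /\
  norm w * sin th <= dist (padd a (pscal t u)) z.
Proof.
  intros Ht u w th.
  destruct (angle_facts w u) as [Hk E].
  set (k := dot w u / (norm w * norm u)) in *.
  assert (Hd : dot (psub (padd a (pscal t u)) z) (psub (padd a (pscal t u)) z)
     = t^2 * dot u u + 2*t*dot w u + dot w w).
  { unfold u, w; destruct a, b, z; unfold dot, psub, padd, pscal; simpl; ring. }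
  unfold dist, norm at 2. rewrite Hd. rewrite E.
  pose proof (dot_ge0 u) as Gu. pose proof (dot_ge0 w) as Gw.
  pose proof (sqrt_sqrt _ Gu) as Su. pose proof (sqrt_sqrt _ Gw) as Sw.
  pose proof (sqrt_pos (dot u u)) as Pu. pose proof (sqrt_pos (dot w w)) as Pw.
  unfold norm in *.
  set (su := sqrt (dot u u)) in *. set (sw := sqrt (dot w w)) in *.
  rewrite <- Su, <- Sw.
  pose proof (cos_acos _ Hk) as Ck. pose proof (acos_bound k) as Bk.
  fold th in Ck, Bk.
  pose proof (sin_ge_0 th ltac:(lra) ltac:(lra)) as Sp.
  pose proof (sin2_cos2 th) as SC. unfold Rsqr in SC.
  split.
  - intro Hle. assert (K0 : 0 <= k). { rewrite <- Ck. apply cos_ge_0; lra. }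
    apply sqrt_ge_of_sq; auto.
    assert (0 <= 2*t*(k*sw*su)).
    { assert (0 <= k*sw*su) by (apply Rmult_le_pos; [apply Rmult_le_pos|]; auto). nra. }
    assert (0 <= t^2*(su*su)) by (apply Rmult_le_pos; [apply pow2_ge_0|nra]). lra.
  - apply sqrt_ge_of_sq. apply Rmult_le_pos; auto.
    assert (0 <= (t*su + k*sw)^2) by apply pow2_ge_0.
    rewrite <- Ck in *. nra.
Qed.

Lemma trig_bound th m L : PI/2 <= th <= PI -> 0 <= m <= L ->
  2 * (m / (2 * tan (th/2))) <= L * sin th.
Proof.
  intros Hth Hm. set (h := th/2).
  replace th with (2*h) by (unfold h; field).
  rewrite sin_2a. pose proof (cos_2a_sin h).
  assert (cos (2*h) <= 0).
  { replace (2*h) with th by (unfold h; field).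
    rewrite <- (cos_neg th). rewrite <- (Ropp_involutive (cos (-th))).
    rewrite <- neg_cos. replace (-th + PI) with (PI - th) by ring.
    assert (0 <= cos (PI - th)) by (apply cos_ge_0; lra). lra. }
  assert (0 <= cos h) by (apply cos_ge_0; unfold h; lra).
  assert (0 <= sin h) by (apply sin_ge_0; unfold h; lra).
  destruct (Req_dec (cos h) 0) as [Z|Z].
  - unfold tan. rewrite Z. unfold Rdiv. rewrite Rinv_0, !Rmult_0_r. rewrite Rinv_0. lra.
  - assert (sin h > 0) by nra.
    unfold tan.
    replace (2 * (m / (2 * (sin h / cos h)))) with (m * cos h * / sin h) by (field; lra).
    pose proof (Rinv_r (sin h) ltac:(lra)) as RI.
    pose proof (Rinv_0_lt_compat (sin h) ltac:(lra)).
    set (s' := / sin h) in *.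
    assert (m * cos h * s' <= L * cos h * s') by (apply Rmult_le_compat_r; [lra|]; apply Rmult_le_compat_r; lra).
    assert (L * cos h * s' <= L * (2 * sin h * cos h)); [|lra].
    assert (1 <= 2 * sin h * sin h) by lra.
    assert (0 <= L * cos h) by nra.
    replace (L * (2 * sin h * cos h)) with (L*cos h * s' * (2 * sin h * sin h)).
    2:{ replace (L*cos h * s' * (2 * sin h * sin h)) with (L * cos h * 2 * sin h * (sin h * s')) by ring. rewrite RI. ring. }
    assert (0 <= L * cos h * s') by nra. nra.
Qed.

Lemma MD_ge a b x B :
  (forall t, 0 <= t <= 1 -> B <= dist (padd a (pscal t (psub b a))) x) -> B <= MD a b x.
Proof.
  intro H. unfold MD.
  set (E := fun d => exists p, on_seg a b p /\ d = dist p x).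
  destruct (Glb_Rbar_correct E) as [Hlb Hgr].
  assert (L1 : Rbar_le (Finite B) (Glb_Rbar E)).
  { apply Hgr. intros d [p [[t [Ht ->]] ->]]. simpl. apply H; auto. }
  assert (L2 : Rbar_le (Glb_Rbar E) (Finite (dist a x))).
  { apply Hlb. exists a. split; auto. exists 0. split; [lra|].
    destruct a, b; unfold padd, pscal, psub; simpl; f_equal; ring. }
  destruct (Glb_Rbar E); simpl in *; auto; contradiction.
Qed.

Lemma fold_min_le l x : In x l -> Rbar_le (fold_right Rbar_min p_infty l) x.
Proof.
  induction l as [|y l IH]; simpl; [tauto|].
  intros [->|H]. apply Rbar_min_l.
  eapply Rbar_le_trans. apply Rbar_min_r. auto.
Qed.

Lemma fold_rmin_le l x d : In x l -> fold_right Rmin d l <= x.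
Proof.
  induction l as [|y l IH]; simpl; [tauto|].
  intros [->|H]. apply Rmin_l.
  eapply Rle_trans. apply Rmin_r. auto.
Qed.

Lemma vtx_congr n v j r c : j mod n = r mod n -> vtx n v (j + c) = vtx n v (r + c).
Proof.
  intro H. unfold vtx. f_equal.
  rewrite Nat.Div0.add_mod, H, <- Nat.Div0.add_mod. reflexivity.
Qed.

Lemma vtx_add_n n v j : vtx n v (j + n) = vtx n v j.
Proof.
  unfold vtx. f_equal. rewrite Nat.Div0.add_mod, Nat.Div0.mod_same, Nat.add_0_r, Nat.Div0.mod_mod.
  reflexivity.
Qed.

Lemma vtx_facts n v j r : (n <> 0)%nat -> j mod n = r mod n ->
  vtx n v j = vtx n v r /\ vtx n v (S j) = vtx n v (S r) /\
  vtx n v (prev n j) = vtx n v (prev n r) /\ vtx n v (S (prev n j)) = vtx n v (S (prev n r)).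
Proof.
  intros Hn H. unfold prev.
  split. { rewrite <- (Nat.add_0_r j), <- (Nat.add_0_r r). apply vtx_congr; auto. }
  split. { replace (S j) with (j+1)%nat by lia. replace (S r) with (r+1)%nat by lia. apply vtx_congr; auto. }
  split. { replace (j + n - 1)%nat with (j + (n-1))%nat by lia.
           replace (r + n - 1)%nat with (r + (n-1))%nat by lia. apply vtx_congr; auto. }
  replace (S (j + n - 1)) with (j + n)%nat by lia.
  replace (S (r + n - 1)) with (r + n)%nat by lia. apply vtx_congr; auto.
Qed.

Lemma Rad_mod n v j : (n <> 0)%nat -> Rad n v j = Rad n v (j mod n).
Proof.
  intro Hn. destruct (vtx_facts n v j (j mod n) Hn (eq_sym (Nat.Div0.mod_mod j n)))
    as [e0 [e1 [e2 e3]]].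
  unfold Rad, angle, edge_len. rewrite e0, e1, e2, e3. reflexivity.
Qed.

Lemma edge_mod n v j : (n <> 0)%nat -> edge_len n v j = edge_len n v (j mod n).
Proof.
  intro Hn. destruct (vtx_facts n v j (j mod n) Hn (eq_sym (Nat.Div0.mod_mod j n)))
    as [e0 [e1 [e2 e3]]].
  unfold edge_len. rewrite e0, e1. reflexivity.
Qed.

Lemma minedge_le n v j : (n <> 0)%nat -> MinEdge n v <= edge_len n v j.
Proof.
  intro Hn. rewrite (edge_mod n v j Hn). unfold MinEdge. apply fold_rmin_le.
  apply in_map. apply in_seq. pose proof (Nat.mod_upper_bound j n Hn). lia.
Qed.

Lemma minrad_le n v j : (n <> 0)%nat -> Rbar_le (MinRad n v) (Rad n v j).
Proof.
  intro Hn. rewrite (Rad_mod n v j Hn). unfold MinRad. apply fold_min_le.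
  apply (in_map (Rad n v) (seq 0 n) (j mod n)). apply in_seq. pose proof (Nat.mod_upper_bound j n Hn). lia.
Qed.

Lemma edge_ge0 n v j : 0 <= edge_len n v j.
Proof. unfold edge_len, dist, norm. apply sqrt_pos. Qed.

Lemma radb n v j L : (n <> 0)%nat -> PI/2 <= angle n v j ->
  Rmin (edge_len n v (prev n j)) (edge_len n v j) <= L ->
  Rbar_le (Rbar_mult 2 (MinRad n v)) (Finite (L * sin (angle n v j))).
Proof.
  intros Hn Ha Hm.
  pose proof (minrad_le n v j Hn) as HM.
  assert (Hb : angle n v j <= PI) by (unfold angle; apply acos_bound).
  assert (Hne : angle n v j <> 0) by (pose proof PI_RGT_0; lra).
  unfold Rad in HM. destruct (Req_EM_T (angle n v j) 0) as [e|_]; [contradiction|].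
  assert (H0 : 0 <= Rmin (edge_len n v (prev n j)) (edge_len n v j)).
  { apply Rmin_glb; apply edge_ge0. }
  pose proof (trig_bound (angle n v j) _ L ltac:(lra) ltac:(split; [exact H0 | exact Hm])).
  destruct (MinRad n v) as [r| |]; simpl in *; try contradiction; try lra; auto.
  destruct (Rle_dec 0 2) as [h|h]; [destruct (Rle_lt_or_eq_dec 0 2 h) as [h1|h1]|]; simpl; auto; lra.
Qed.

Lemma combine (R2 : Rbar) (ME L th D : R) :
  (th <= PI/2 -> L <= D) -> L * sin th <= D -> ME <= L ->
  (PI/2 <= th -> Rbar_le R2 (Finite (L * sin th))) ->
  Rbar_le (Rbar_min R2 (Finite ME)) (Finite D) /\ (PI/2 <= th -> Rbar_le R2 (Finite D)).
Proof.
  intros H1 H2 H3 H4.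
  assert (H5 : PI/2 <= th -> Rbar_le R2 (Finite D)).
  { intro h. eapply Rbar_le_trans. apply H4; auto. simpl. auto. }
  split; auto.
  destruct (Rle_lt_dec th (PI/2)) as [h|h].
  - eapply Rbar_le_trans. apply Rbar_min_r. simpl. specialize (H1 h). lra.
  - eapply Rbar_le_trans. apply Rbar_min_l. apply H5. lra.
Qed.

Theorem lemma3p3 (n : nat) (v : nat -> pt) (i : nat) :
  is_knot n v -> (i < n)%nat ->
  let MDnext := MD (vtx n v i) (vtx n v (S i)) (vtx n v (S (S i))) in
  let MDprev := MD (vtx n v i) (vtx n v (S i)) (vtx n v (prev n i)) in
  Rbar_le (MinBound n v) (Finite MDnext) /\
  (PI / 2 <= angle n v (S i) ->
     Rbar_le (Rbar_mult 2 (MinRad n v)) (Finite MDnext)) /\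
  Rbar_le (MinBound n v) (Finite MDprev) /\
  (PI / 2 <= angle n v i ->
     Rbar_le (Rbar_mult 2 (MinRad n v)) (Finite MDprev)).
Proof.
  intros Hk Hi MDnext MDprev.
  assert (Hn : (n <> 0)%nat) by lia.
  assert (Hp1 : vtx n v (prev n (S i)) = vtx n v i).
  { unfold prev. replace (S i + n - 1)%nat with (i + n)%nat by lia. apply vtx_add_n. }
  assert (Hp2 : vtx n v (S (prev n i)) = vtx n v i).
  { unfold prev. replace (S (i + n - 1))%nat with (i + n)%nat by lia. apply vtx_add_n. }
  set (a := vtx n v i) in *. set (b := vtx n v (S i)) in *.
  set (c := vtx n v (S (S i))) in *. set (z := vtx n v (prev n i)) in *.
  assert (Ea1 : angle n v (S i) = acos (dot (psub b a) (psub c b) / (norm (psub b a) * norm (psub c b)))).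
  { unfold angle. rewrite Hp1. reflexivity. }
  assert (Ea0 : angle n v i = acos (dot (psub a z) (psub b a) / (norm (psub a z) * norm (psub b a)))).
  { unfold angle. reflexivity. }
  assert (El1 : edge_len n v (S i) = norm (psub c b)) by reflexivity.
  assert (El0 : edge_len n v (prev n i) = norm (psub a z)).
  { unfold edge_len. rewrite Hp2. reflexivity. }
  unfold MinBound.
  assert (A : Rbar_le (Rbar_min (Rbar_mult 2 (MinRad n v)) (Finite (MinEdge n v))) (Finite MDnext) /\
     (PI / 2 <= angle n v (S i) -> Rbar_le (Rbar_mult 2 (MinRad n v)) (Finite MDnext))).
  { apply (combine _ _ (edge_len n v (S i))).
    - intro h. apply MD_ge. intros t Ht. destruct (next_dist a b c t Ht) as [H1 _].
      rewrite El1. apply H1. rewrite <- Ea1. exact h.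
    - apply MD_ge. intros t Ht. destruct (next_dist a b c t Ht) as [_ H1].
      rewrite El1, Ea1. exact H1.
    - apply minedge_le; auto.
    - intro h. apply radb; auto. apply Rmin_r. }
  assert (B : Rbar_le (Rbar_min (Rbar_mult 2 (MinRad n v)) (Finite (MinEdge n v))) (Finite MDprev) /\
     (PI / 2 <= angle n v i -> Rbar_le (Rbar_mult 2 (MinRad n v)) (Finite MDprev))).
  { apply (combine _ _ (edge_len n v (prev n i))).
    - intro h. apply MD_ge. intros t Ht. destruct (prev_dist a b z t Ht) as [H1 _].
      rewrite El0. apply H1. rewrite <- Ea0. exact h.
    - apply MD_ge. intros t Ht. destruct (prev_dist a b z t Ht) as [_ H1].
      rewrite El0, Ea0. exact H1.
    - apply minedge_le; auto.
    - intro h. apply radb; auto. apply Rmin_l. }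
  tauto.
Qed.
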